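(* Let $N\ge1$, $p,q>0$ with $p+q=1$. Let $P'_{Y'}(X';t)$ be the transition probability of the AZRP with $N$ particles from $Y'$ to $X'$ at time $t$, and $P_Y(X;t)$ the transition probability of the ASEP with $N$ particles from $Y$ to $X$ at time $t$. Define $f(x_1,\dots,x_N)=(x_1+1,x_2+2,\dots,x_N+N)$, a bijection from $\{x_1\le\cdots\le x_N\}\subset\mathbb{Z}^N$ onto $\{x_1<\cdots<x_N\}\subset\mathbb{Z}^N$. Then for all $X',Y'$ with weakly increasing coordinates and all $t\ge0$, $P'_{Y'}(X';t)=P_{f(Y')}(f(X');t)$.
   Context: AZRP: any number of particles may occupy a site of $\mathbb{Z}$; from each occupied site one particle leaves at rate $1$, moving to the right neighbor with probability $p$ and to the left neighbor with probability $q$; configurations are the ordered positions $x_1\le\cdots\le x_N$. ASEP (asymmetric simple exclusion process): at most one particle per site; each particle jumps one step to the right at rate $p$ and one step to the left at rate $q$, a jump being suppressed if the target site is occupied; configurations are $x_1<\cdots<x_N$. *)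

(* Defs.v *)
From Stdlib Require Import Reals ZArith List Lia Lra Sorted.
From Coquelicot Require Import Coquelicot.
Open Scope R_scope.

(* Configurations of N particles: lists of integer positions x_1, ..., x_N
   (index 0 of the list is x_1). *)

Definition upd (x : list Z) (i : nat) (v : Z) : list Z :=
  firstn i x ++ v :: skipn (S i) x.

Definition asep_out (p q : R) (x : list Z) : list (list Z * R) :=
  flat_map (fun i =>
    let xi := nth i x 0%Z in
    (if existsb (Z.eqb (xi + 1)%Z) x then nil else (upd x i (xi + 1)%Z, p) :: nil)
    ++ (if existsb (Z.eqb (xi - 1)%Z) x then nil else (upd x i (xi - 1)%Z, q) :: nil))
    (seq 0 (length x)).

(* AZRP on ordered configurations x_1 <= ... <= x_N: from each occupied site a
   one particle leaves at rate 1, to a+1 w.p. p, to a-1 w.p. q.  In the ordered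
   labelling, a right jump from site a moves the rightmost particle at a
   (index i with i = N or x_{i+1} > x_i) and a left jump moves the leftmost
   particle at a (index i with i = 1 or x_{i-1} < x_i). *)
Definition azrp_out (p q : R) (x : list Z) : list (list Z * R) :=
  flat_map (fun i =>
    let xi := nth i x 0%Z in
    (if orb (Nat.eqb (S i) (length x)) (Z.ltb xi (nth (S i) x 0%Z))
     then (upd x i (xi + 1)%Z, p) :: nil else nil)
    ++ (if orb (Nat.eqb i 0) (Z.ltb (nth (i - 1) x 0%Z) xi)
        then (upd x i (xi - 1)%Z, q) :: nil else nil))
    (seq 0 (length x)).

Definition rate_total (out : list (list Z * R)) : R :=
  fold_right (fun zr acc => snd zr + acc) 0 out.

(* Entries of the k-th power of the generator Q:
   Q(y,z) = rate of jump y -> z for z <> y, Q(y,y) = - total rate out of y. *)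
Fixpoint Qpow (out : list Z -> list (list Z * R)) (k : nat) (y x : list Z) : R :=
  match k with
  | O => if list_eq_dec Z.eq_dec y x then 1 else 0
  | S k' => fold_right (fun zr acc => snd zr * Qpow out k' (fst zr) x + acc) 0 (out y)
            - rate_total (out y) * Qpow out k' y x
  end.

Definition trans_prob (out : list Z -> list (list Z * R)) (y x : list Z) (t : R) : R :=
  Series (fun k => t ^ k / INR (fact k) * Qpow out k y x).

Definition azrp_P (p q : R) (y x : list Z) (t : R) : R := trans_prob (azrp_out p q) y x t.
Definition asep_P (p q : R) (y x : list Z) (t : R) : R := trans_prob (asep_out p q) y x t.

Fixpoint shift_from (x : list Z) (k : Z) : list Z :=
  match x with
  | nil => nil
  | a :: r => (a + k)%Z :: shift_from r (k + 1)%Z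
  end.
Definition fmap (x : list Z) : list Z := shift_from x 1%Z.

(* Main.v *)
Require Import Defs.
From Stdlib Require Import Reals ZArith List Sorted Lia Lra.
From Coquelicot Require Import Coquelicot.
Open Scope R_scope.
Open Scope Z_scope.

Definition mono (y : list Z) := forall j k, (j <= k < length y)%nat -> (nth j y 0 <= nth k y 0)%Z.

Lemma sorted_mono y : Sorted Z.le y -> mono y.
Proof.
  intro H. apply Sorted_StronglySorted in H; [|intros a b c; lia].
  induction H as [|a l Hs IH Hf]; intros j k Hjk; simpl in *; [lia|].
  destruct j as [|j], k as [|k]; try lia.
  - rewrite List.Forall_forall in Hf. apply Hf, nth_In. lia.
  - apply IH. lia.
Qed.

Lemma length_shift y k : length (shift_from y k) = length y.
Proof. revert k; induction y; intros; simpl; auto. Qed.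

Lemma nth_shift y : forall k j, (j < length y)%nat ->
  nth j (shift_from y k) 0%Z = (nth j y 0 + k + Z.of_nat j)%Z.
Proof.
  induction y as [|a y IH]; intros k j Hj; simpl in *; [lia|].
  destruct j as [|j]; [lia|]. rewrite IH by lia. lia.
Qed.

Lemma shift_inj x : forall y k, shift_from x k = shift_from y k -> x = y.
Proof.
  induction x as [|a x IH]; intros [|b y] k H; simpl in H; try discriminate; auto.
  injection H as H1 H2. f_equal; [lia|]. eauto.
Qed.

Lemma upd_len y : forall i v, (i < length y)%nat -> length (upd y i v) = length y.
Proof.
  induction y as [|a y IH]; intros i v Hi; simpl in *; [lia|].
  destruct i as [|i]; [reflexivity|].
  change (upd (a :: y) (S i) v) with (a :: upd y i v). simpl. rewrite IH; lia.
Qed.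

Lemma nth_upd y : forall i v j, (i < length y)%nat ->
  nth j (upd y i v) 0%Z = if Nat.eqb j i then v else nth j y 0%Z.
Proof.
  induction y as [|a y IH]; intros i v j Hi; simpl in *; [lia|].
  destruct i as [|i].
  - destruct j; reflexivity.
  - change (upd (a :: y) (S i) v) with (a :: upd y i v).
    destruct j as [|j]; [reflexivity|]. simpl. apply IH. lia.
Qed.

Lemma upd_fmap y i d : (i < length y)%nat ->
  upd (fmap y) i (nth i (fmap y) 0 + d)%Z = fmap (upd y i (nth i y 0 + d)%Z).
Proof.
  intro Hi. unfold fmap.
  apply nth_ext with (d := 0%Z) (d' := 0%Z).
  - rewrite upd_len, !length_shift, upd_len; auto. rewrite length_shift; auto.
  - intros n Hn. rewrite upd_len in Hn by (rewrite length_shift; auto).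
    rewrite length_shift in Hn.
    rewrite nth_upd by (rewrite length_shift; auto).
    rewrite !nth_shift by (rewrite ?upd_len; lia).
    rewrite nth_upd by auto.
    destruct (Nat.eqb_spec n i); subst; lia.
Qed.

Lemma existsb_nth a l : existsb (Z.eqb a) l = true <->
  exists j, (j < length l)%nat /\ nth j l 0%Z = a.
Proof.
  rewrite existsb_exists. split.
  - intros [x [Hx He]]. apply Z.eqb_eq in He. subst.
    destruct (In_nth _ _ 0%Z Hx) as [n [Hn Hn']]. eauto.
  - intros [j [Hj Hn]]. exists a. split; [rewrite <- Hn; apply nth_In; auto|].
    apply Z.eqb_refl.
Qed.

Lemma flat_map_ext_in {A B} (F G : A -> list B) l :
  (forall i, In i l -> F i = G i) -> flat_map F l = flat_map G l.
Proof.
  induction l; intros H; simpl; auto. rewrite H by (left; auto).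
  rewrite IHl; auto. intros; apply H; right; auto.
Qed.

Lemma map_flat_map' {A B C} (g : B -> C) (F : A -> list B) l :
  map g (flat_map F l) = flat_map (fun i => map g (F i)) l.
Proof. induction l; simpl; auto. rewrite map_app, IHl; auto. Qed.

Definition gmap (zr : list Z * R) : list Z * R := (fmap (fst zr), snd zr).

Lemma out_corr p q y : mono y ->
  asep_out p q (fmap y) = map gmap (azrp_out p q y).
Proof.
  intro Hm. unfold asep_out, azrp_out. replace (length (fmap y)) with (length y) by (symmetry; apply length_shift).
  rewrite map_flat_map'. apply flat_map_ext_in. intros i Hi.
  apply in_seq in Hi. set (n := length y) in *.
  assert (Hfi : nth i (fmap y) 0%Z = (nth i y 0 + 1 + Z.of_nat i)%Z)
    by (apply nth_shift; lia).
  assert (Hfj : forall j, (j < n)%nat -> nth j (fmap y) 0%Z = (nth j y 0 + 1 + Z.of_nat j)%Z)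
    by (intros; apply nth_shift; lia).
  assert (Hlf : length (fmap y) = n) by apply length_shift.
  rewrite map_app. f_equal.
  -
    assert (E : existsb (Z.eqb (nth i (fmap y) 0 + 1)) (fmap y) =
                negb (orb (Nat.eqb (S i) n) (Z.ltb (nth i y 0) (nth (S i) y 0)))).
    { destruct (Nat.eqb_spec (S i) n); destruct (Z.ltb_spec (nth i y 0) (nth (S i) y 0));
        simpl.
      - apply Bool.not_true_iff_false. rewrite existsb_nth. intros [j [Hj Hj']].
        rewrite Hlf in Hj. rewrite Hfj in Hj' by auto. rewrite Hfi in Hj'.
        assert (nth j y 0 <= nth i y 0)%Z by (apply Hm; lia). lia.
      - apply Bool.not_true_iff_false. rewrite existsb_nth. intros [j [Hj Hj']].
        rewrite Hlf in Hj. rewrite Hfj in Hj' by auto. rewrite Hfi in Hj'.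
        assert (nth j y 0 <= nth i y 0)%Z by (apply Hm; lia). lia.
      - apply Bool.not_true_iff_false. rewrite existsb_nth. intros [j [Hj Hj']].
        rewrite Hlf in Hj. rewrite Hfj in Hj' by auto. rewrite Hfi in Hj'.
        destruct (Nat.le_gt_cases j i).
        + assert (nth j y 0 <= nth i y 0)%Z by (apply Hm; lia). lia.
        + destruct (Nat.eq_dec j (S i)); [subst; lia|].
          assert (nth (S i) y 0 <= nth j y 0)%Z by (apply Hm; lia). lia.
      - rewrite existsb_nth. exists (S i). split; [lia|].
        rewrite Hfj by lia. rewrite Hfi.
        assert (nth i y 0 <= nth (S i) y 0)%Z by (apply Hm; lia). lia. }
    rewrite E. destruct (orb _ _); simpl; auto.
    unfold gmap; simpl. f_equal. f_equal. apply upd_fmap. lia.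
  -
    assert (E : existsb (Z.eqb (nth i (fmap y) 0 - 1)) (fmap y) =
                negb (orb (Nat.eqb i 0) (Z.ltb (nth (i - 1) y 0) (nth i y 0)))).
    { destruct (Nat.eqb_spec i 0); destruct (Z.ltb_spec (nth (i-1) y 0) (nth i y 0));
        simpl.
      - apply Bool.not_true_iff_false. rewrite existsb_nth. intros [j [Hj Hj']].
        rewrite Hlf in Hj. rewrite Hfj in Hj' by auto. rewrite Hfi in Hj'.
        assert (nth i y 0 <= nth j y 0)%Z by (apply Hm; lia). lia.
      - apply Bool.not_true_iff_false. rewrite existsb_nth. intros [j [Hj Hj']].
        rewrite Hlf in Hj. rewrite Hfj in Hj' by auto. rewrite Hfi in Hj'.
        assert (nth i y 0 <= nth j y 0)%Z by (apply Hm; lia). lia.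
      - apply Bool.not_true_iff_false. rewrite existsb_nth. intros [j [Hj Hj']].
        rewrite Hlf in Hj. rewrite Hfj in Hj' by auto. rewrite Hfi in Hj'.
        destruct (Nat.le_gt_cases i j).
        + assert (nth i y 0 <= nth j y 0)%Z by (apply Hm; lia). lia.
        + destruct (Nat.eq_dec j (i - 1)); [subst; lia|].
          assert (nth j y 0 <= nth (i-1) y 0)%Z by (apply Hm; lia). lia.
      - rewrite existsb_nth. exists (i - 1)%nat. split; [lia|].
        rewrite Hfj by lia. rewrite Hfi.
        assert (nth (i-1) y 0 <= nth i y 0)%Z by (apply Hm; lia).
        replace (Z.of_nat (i - 1)) with (Z.of_nat i - 1)%Z by lia. lia. }
    rewrite E. destruct (orb _ _); simpl; auto.
    unfold gmap; simpl. f_equal. f_equal.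
    replace (nth i (fmap y) 0 - 1)%Z with (nth i (fmap y) 0 + -1)%Z by lia.
    replace (nth i y 0 - 1)%Z with (nth i y 0 + -1)%Z by lia.
    apply upd_fmap. lia.
Qed.

Lemma out_mono p q y : mono y -> List.Forall (fun zr => mono (fst zr)) (azrp_out p q y).
Proof.
  intro Hm. unfold azrp_out. apply List.Forall_forall. intros zr Hzr.
  apply in_flat_map in Hzr. destruct Hzr as [i [Hi Hzr]].
  apply in_seq in Hi. set (n := length y) in *.
  apply in_app_or in Hzr. destruct Hzr as [Hzr|Hzr].
  - destruct (orb (Nat.eqb (S i) n) (Z.ltb (nth i y 0) (nth (S i) y 0))) eqn:E;
      [|destruct Hzr]. destruct Hzr as [<-|[]]. simpl.
    apply Bool.orb_true_iff in E. rewrite Nat.eqb_eq, Z.ltb_lt in E.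
    intros j k Hjk. rewrite upd_len in Hjk by lia. fold n in Hjk.
    rewrite !nth_upd by lia.
    destruct (Nat.eqb_spec j i), (Nat.eqb_spec k i); subst.
    + lia.
    + assert (nth (S i) y 0 <= nth k y 0)%Z by (apply Hm; lia). lia.
    + assert (nth j y 0 <= nth i y 0)%Z by (apply Hm; lia). lia.
    + apply Hm; lia.
  - destruct (orb (Nat.eqb i 0) (Z.ltb (nth (i-1) y 0) (nth i y 0))) eqn:E;
      [|destruct Hzr]. destruct Hzr as [<-|[]]. simpl.
    apply Bool.orb_true_iff in E. rewrite Nat.eqb_eq, Z.ltb_lt in E.
    intros j k Hjk. rewrite upd_len in Hjk by lia. fold n in Hjk.
    rewrite !nth_upd by lia.
    destruct (Nat.eqb_spec j i), (Nat.eqb_spec k i); subst.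
    + lia.
    + assert (nth i y 0 <= nth k y 0)%Z by (apply Hm; lia). lia.
    + assert (nth j y 0 <= nth (i-1) y 0)%Z by (apply Hm; lia). lia.
    + apply Hm; lia.
Qed.

Open Scope R_scope.
Lemma Qpow_corr p q x k : forall y, mono y ->
  Qpow (azrp_out p q) k y x = Qpow (asep_out p q) k (fmap y) (fmap x).
Proof.
  induction k as [|k IH]; intros y Hm; simpl.
  - destruct (list_eq_dec Z.eq_dec y x), (list_eq_dec Z.eq_dec (fmap y) (fmap x));
      subst; auto; exfalso.
    + apply n; auto.
    + apply n, (shift_inj _ _ 1%Z e).
  - rewrite (out_corr p q y Hm). rewrite <- IH by auto.
    pose proof (out_mono p q y Hm) as HF.
    induction (azrp_out p q y) as [|zr l IHl]; simpl; [auto|].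
    inversion HF; subst. rewrite <- IH by auto.
    unfold rate_total in *. simpl in *.
    specialize (IHl H2). lra.
Qed.

Theorem mainTheorem3 (N : nat) (p q t : R) (X' Y' : list Z) :
  (1 <= N)%nat -> 0 < p -> 0 < q -> p + q = 1 ->
  length X' = N -> length Y' = N ->
  Sorted Z.le X' -> Sorted Z.le Y' ->
  0 <= t ->
  azrp_P p q Y' X' t = asep_P p q (fmap Y') (fmap X') t.
Proof.
  intros _ _ _ _ _ _ _ HY _.
  unfold azrp_P, asep_P, trans_prob. apply Series_ext. intro k.
  rewrite Qpow_corr; auto. apply sorted_mono; auto.
Qed.
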